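(* For every finite graph $G$ with at least one edge and every positive integer $r$, \[ \mathrm{scol}_r(G)\le \biggl(3+\mathrm{tww}(G)\sum_{i=0}^{r-1}(\mathrm{tww}(G)-1)^{i}\biggr)\,\bar\omega(G)\le \bigl(\mathrm{tww}(G)^r+3\bigr)\,\bar\omega(G), \] with the convention $0^0=1$.
   Context: $\bar\omega(G)$ denotes the maximum integer $s$ such that the complete bipartite graph $K_{s,s}$ is a subgraph of $G$. Twin-width: a trigraph is a vertex set together with two disjoint sets of edges, black and red. Contracting two vertices $x,y$ of a trigraph produces a trigraph in which $x,y$ are replaced by a new vertex $z$ adjacent to every other vertex $w$ adjacent (by any edge) to $x$ or to $y$; the edge $zw$ is black if $xw$ and $yw$ are both black edges, and red otherwise; all other edges are unchanged. A $d$-contraction sequence of an $n$-vertex graph $G$ is a sequence of trigraphs $\mathbf G_n,\dots,\mathbf G_1$ where $\mathbf G_n$ is $G$ with all edges black, each $\mathbf G_i$ is obtained from $\mathbf G_{i+1}$ by one contraction, $\mathbf G_1$ has a single vertex, and every vertex of every $\mathbf G_i$ is incident to at most $d$ red edges. The twin-width $\mathrm{tww}(G)$ is the minimum $d$ for which $G$ has a $d$-contraction sequence. Strong colouring number: for a linear order $L$ of $V(G)$, a vertex $u$ is strongly $r$-reachable from $v$ if there is a path of length at most $r$ between $u$ and $v$ with $u\le_L v$ and all inner vertices $w$ satisfying $v<_L w$; $\mathrm{Sreach}_r[L,v]$ is the set of such $u$ (including $v$), and $\mathrm{scol}_r(G)=\min_L\max_{v}|\mathrm{Sreach}_r[L,v]|$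 over linear orders $L$ of $V(G)$. *)

(* Defs.v *)
From mathcomp Require Import all_boot.
Set Implicit Arguments. Unset Strict Implicit. Unset Printing Implicit Defensive.

Section Graphs.
Variable T : finType.

Definition simple_graph (e : rel T) : Prop := symmetric e /\ irreflexive e.

Definition has_Kss (e : rel T) (s : nat) : bool :=
  [exists A : {set T}, exists B : {set T},
     [&& #|A| == s, #|B| == s, [disjoint A & B] &
         [forall a in A, forall b in B, e a b]]].

Definition omegabar (e : rel T) : nat :=
  \max_(s < #|T|.+1 | has_Kss e s) (s : nat).

(* A trigraph whose vertices are a subset tV of T, with black edges tB and
   red edges tR (only pairs of vertices in tV are meaningful). *)
Record trigraph := Trigraph { tV : {set T}; tB : rel T; tR : rel T }.

Definition init_trigraph (e : rel T) : trigraph :=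
  Trigraph [set: T] e (fun _ _ => false).

(* Contract x and y: the new vertex z is named x, and y is removed. *)
Definition contract (G : trigraph) (x y : T) : trigraph :=
  let adj u v := tB G u v || tR G u v in
  let other u v := if u == x then v else u in
  Trigraph (tV G :\ y)
    (fun u v => if (u == x) || (v == x) then
                  let w := other u v in
                  [&& w != x, tB G x w & tB G y w]
                else tB G u v)
    (fun u v => if (u == x) || (v == x) then
                  let w := other u v in
                  [&& w != x, adj x w || adj y w & ~~ (tB G x w && tB G y w)]
                else tR G u v).

Definition red_deg (G : trigraph) (v : T) : nat :=
  #|[set w in tV G | tR G v w]|.

Definition red_bounded (d : nat) (G : trigraph) : bool :=
  [forall v in tV G, red_deg G v <= d].

Fixpoint contraction_seq (d : nat) (G : trigraph) (s : seq (T * T)) : bool :=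
  red_bounded d G &&
  match s with
  | [::] => #|tV G| == 1
  | (x, y) :: s' =>
      [&& x \in tV G, y \in tV G, x != y &
          contraction_seq d (contract G x y) s']
  end.

Definition has_contraction_seq (e : rel T) (d : nat) : Prop :=
  exists s, contraction_seq d (init_trigraph e) s.

Definition is_tww (e : rel T) (t : nat) : Prop :=
  has_contraction_seq e t /\ forall d, d < t -> ~ has_contraction_seq e d.

(* A linear order L of V(G) is encoded by an injective rank function
   f : T -> 'I_#|T| with u <=_L v iff f u <= f v. *)

(* u is strongly r-reachable from v: there is a path v = p_0, p_1, ..., p_k = u
   of length k <= r, with f u <= f v and all inner vertices w with f v < f w. *)
Definition sreach_path (e : rel T) (f : {ffun T -> 'I_#|T|}) (r : nat)
    (v u : T) : bool :=
  [exists n : 'I_r.+1, exists p : n.-tuple T,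
     [&& path e v p, last v p == u, uniq (v :: p) &
         all (fun w => f v < f w) (take (size p).-1 p)]].

Definition Sreach (e : rel T) (f : {ffun T -> 'I_#|T|}) (r : nat) (v : T)
    : {set T} :=
  [set u | (f u <= f v) && sreach_path e f r v u].

Definition scol (e : rel T) (r : nat) : nat :=
  \big[minn/#|T|]_(f : {ffun T -> 'I_#|T|} | injectiveb f)
     \max_(v : T) #|Sreach e f r v|.

End Graphs.

(* Main.v *)
Require Import Defs.
From mathcomp Require Import all_boot.
From mathcomp Require Import zify.
Set Implicit Arguments. Unset Strict Implicit. Unset Printing Implicit Defensive.

Lemma bigminn_le (I : finType) (P : pred I) (F : I -> nat) idx i0 :
  P i0 -> \big[minn/idx]_(i | P i) F i <= F i0.
Proof.
move=> Pi0; rewrite unlock.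
have : i0 \in index_enum I by rewrite mem_index_enum.
elim: (index_enum I) => //= j s IH; rewrite inE => /orP[/eqP<-|Hs].
  by rewrite Pi0 geq_minl.
case: (P j); last exact: IH.
exact: leq_trans (geq_minr _ _) (IH Hs).
Qed.

Lemma card_bigcup_le (T I : finType) (A : pred I) (F : I -> {set T}) :
  #|\bigcup_(i in A) F i| <= \sum_(i in A) #|F i|.
Proof.
elim/big_rec2: _ => [|i x y _ Hxy]; first by rewrite cards0.
exact: leq_trans (leq_card_setU _ _).1 (leq_add (leqnn _) Hxy).
Qed.

Lemma cardU_le (T : finType) (A B : {set T}) : #|A :|: B| <= #|A| + #|B|.
Proof. exact: (leq_card_setU _ _).1. Qed.

Lemma has_Kss_le (T : finType) (e : rel T) s : has_Kss e s -> s <= omegabar e.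
Proof.
move=> H.
have Hs : s < #|T|.+1.
  move/existsP: H => [A /existsP [B /and4P [/eqP <- _ _ _]]].
  by rewrite ltnS max_card.
by rewrite /omegabar (leq_bigmax_cond (Ordinal Hs)).
Qed.

Lemma Kss_bound (T : finType) (e : rel T) (X Y : {set T}) :
  [disjoint X & Y] -> (forall a b, a \in X -> b \in Y -> e a b) ->
  minn #|X| #|Y| <= omegabar e.
Proof.
move=> dXY cXY; apply: has_Kss_le.
set s := minn _ _.
have /card_geqP [sx [ux szx subx]] : s <= #|X| by rewrite geq_minl.
have /card_geqP [sy [uy szy suby]] : s <= #|Y| by rewrite geq_minr.
apply/existsP; exists [set z in sx]; apply/existsP; exists [set z in sy].
rewrite !cardsE (card_uniqP ux) (card_uniqP uy) szx szy !eqxx /=.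
apply/andP; split.
  apply: (disjointWl (B := X)); first by apply/subsetP=> z; rewrite inE; apply: subx.
  apply: (disjointWr (B := Y)); first by apply/subsetP=> z; rewrite inE; apply: suby.
  exact: dXY.
apply/forallP=> a; apply/implyP; rewrite inE => Ha.
apply/forallP=> b; apply/implyP; rewrite inE => Hb.
exact: cXY (subx _ Ha) (suby _ Hb).
Qed.

Lemma omegabar_lt (T : finType) (e : rel T) : 0 < #|T| -> omegabar e < #|T|.
Proof.
move=> HT; rewrite /omegabar.
have -> : #|T| = (#|T|.-1).+1 by rewrite prednK.
rewrite ltnS; apply/bigmax_leqP => s.
move/existsP=> [A /existsP [B /and4P [/eqP HA /eqP HB dAB _]]].
have := max_card (A :|: B).
rewrite cardsU (disjoint_setI0 dAB) cards0 subn0 HA HB.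
lia.
Qed.

Lemma omegabar_ge1 (T : finType) (e : rel T) x y : x != y -> e x y -> 1 <= omegabar e.
Proof.
move=> xy exy.
have H := @Kss_bound T e [set x] [set y].
rewrite !cards1 /= in H; apply: H.
  by rewrite disjoint_sym disjoints1 in_set1 eq_sym.
by move=> a b; rewrite !inE => /eqP-> /eqP->.
Qed.

Section Inv.
Variable T : finType.
Variable e : rel T.
Hypothesis esym : symmetric e.

Definition InvP (G : trigraph T) (rp : T -> T) : Prop :=
  [/\ forall z, rp z \in tV G,
      forall a b, tR G a b = tR G b a,
      forall z w, e z w -> rp z != rp w -> tB G (rp z) (rp w) || tR G (rp z) (rp w)
    & forall z w, rp z != rp w -> tB G (rp z) (rp w) -> e z w].

Lemma InvP_init : InvP (init_trigraph e) id.
Proof.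
split=> /=.
- by move=> z; exact: in_setT.
- by [].
- by move=> z w ->.
- by [].
Qed.

Lemma contract_inv (G : trigraph T) (rp : T -> T) x y :
  x \in tV G -> y \in tV G -> x != y -> InvP G rp ->
  InvP (contract G x y) (fun z => if rp z == y then x else rp z).
Proof.
move=> xV yV xy [Hin Hsym Hedge Hblack].
have char : forall z, ((rp z = x \/ rp z = y) /\ (if rp z == y then x else rp z) = x)
   \/ [/\ rp z != x, rp z != y & (if rp z == y then x else rp z) = rp z].
  move=> z; case: (eqVneq (rp z) y) => [->|zy]; first by left; split; [right|].
  case: (eqVneq (rp z) x) => [->|zx]; first by left; split; [left|].
  by right.
split.
- move=> z /=; rewrite in_setD1.
  case: (eqVneq (rp z) y) => [_|zy]; first by rewrite xy xV.
  by rewrite zy Hin.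
- move=> a b /=.
  case: (eqVneq a x) => [->|ax]; case: (eqVneq b x) => [->|bx]; rewrite ?eqxx ?(negbTE ax) ?(negbTE bx) //=.
- move=> z w ezw.
  case: (char z) => [[Hz ->]|[zx zy ->]]; case: (char w) => [[Hw ->]|[wx wy ->]].
  + by rewrite eqxx.
  + move=> _ /=; rewrite eqxx /= wx /=.
    case: (boolP (tB G x (rp w) && tB G y (rp w))) => //= _.
    have := Hedge z w ezw; case: Hz => ->.
    * by rewrite eq_sym wx => /(_ isT) ->.
    * by rewrite eq_sym wy => /(_ isT) ->; rewrite !orbT.
  + move=> _ /=; rewrite eqxx orbT /= (negbTE zx) zx /=.
    case: (boolP (tB G x (rp z) && tB G y (rp z))) => //= _.
    have := Hedge w z; rewrite esym => /(_ ezw); case: Hw => ->.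
    * by rewrite eq_sym zx => /(_ isT) ->.
    * by rewrite eq_sym zy => /(_ isT) ->; rewrite !orbT.
  + move=> zw /=; rewrite (negbTE zx) (negbTE wx) /=.
    exact: Hedge.
- move=> z w.
  case: (char z) => [[Hz ->]|[zx zy ->]]; case: (char w) => [[Hw ->]|[wx wy ->]].
  + by rewrite eqxx.
  + move=> _ /=; rewrite eqxx /= => /and3P [_ B1 B2].
    by case: Hz => Hz; apply: Hblack; rewrite Hz // eq_sym.
  + move=> _ /=; rewrite eqxx orbT /= (negbTE zx) => /and3P [_ B1 B2].
    by rewrite esym; case: Hw => Hw; apply: Hblack; rewrite Hw // eq_sym.
  + move=> zw /=; rewrite (negbTE zx) (negbTE wx) /=.
    exact: Hblack.
Qed.
End Inv.

Definition cstep (T : finType) (G : trigraph T) (p : T * T) := contract G p.1 p.2.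

Lemma cseq_props (T : finType) d (s : seq (T * T)) (G0 : trigraph T) x0 :
  contraction_seq d G0 s ->
  [/\ forall k, k <= size s -> red_bounded d (foldl (@cstep T) G0 (take k s)),
      forall k, k < size s ->
        [&& (nth (x0,x0) s k).1 \in tV (foldl (@cstep T) G0 (take k s)),
            (nth (x0,x0) s k).2 \in tV (foldl (@cstep T) G0 (take k s)) &
            (nth (x0,x0) s k).1 != (nth (x0,x0) s k).2]
    & #|tV (foldl (@cstep T) G0 s)| == 1].
Proof.
elim: s G0 => [|[x y] s IH] G0 /=.
  by move=> /andP [H1 H2]; split=> // [[|k]] //.
move=> /andP [Hr /and4P [xV yV xy Hc]].
have [IH1 IH2 IH3] := IH _ Hc.
split=> // [[|k]|[|k]] //= Hk.
- exact: IH1.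
- by rewrite xV yV xy.
- exact: IH2.
Qed.

Section Ball.
Variables (T : finType) (V : {set T}) (R : rel T) (t : nat) (P : T).
Hypothesis Rsym : forall a b, R a b = R b a.
Hypothesis deg : forall a, a \in V -> #|[set b in V | R a b]| <= t.
Hypothesis PV : P \in V.

Fixpoint ball d : {set T} :=
  if d is d'.+1 then ball d' :|: [set b in V | [exists a in ball d', R a b]]
  else [set P].

Lemma ball_S d : ball d.+1 = ball d :|: [set b in V | [exists a in ball d, R a b]].
Proof. by []. Qed.
Lemma ball_0 : ball 0 = [set P].
Proof. by []. Qed.
Arguments ball : simpl never.

Lemma ball_succ d : ball d \subset ball d.+1.
Proof. by rewrite ball_S subsetUl. Qed.

Lemma ball_mono d d' : d <= d' -> ball d \subset ball d'.
Proof.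
elim: d' => [|d' IH]; first by rewrite leqn0 => /eqP->.
rewrite leq_eqVlt => /orP[/eqP->//|]; rewrite ltnS => /IH H.
exact: subset_trans H (ball_succ _).
Qed.

Lemma ball_sub d : ball d \subset V.
Proof.
elim: d => [|d IH]; first by rewrite ball_0 sub1set.
rewrite ball_S subUset IH /=; apply/subsetP=> b; rewrite inE; by case/andP.
Qed.

Lemma ball_step d a b : a \in ball d -> b \in V -> R a b -> b \in ball d.+1.
Proof.
move=> Ha Hb Rab; rewrite ball_S inE; apply/orP; right.
rewrite inE Hb /=; apply/existsP; exists a; by rewrite Ha.
Qed.

Definition layer d := ball d.+1 :\: ball d.

Lemma layer_pred d b : b \in layer d.+1 ->
  exists2 a, a \in layer d & R a b.
Proof.
rewrite inE => /andP [nb]; rewrite ball_S inE (negbTE nb) /= inE => /andP [bV].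
move/existsP=> [a /andP [Ha Rab]]; exists a => //.
rewrite inE Ha andbT; apply: contra nb => Ha'.
exact: ball_step Ha' bV Rab.
Qed.

Lemma layer_card d : #|layer d| <= t * (t - 1) ^ d.
Proof.
elim: d => [|d IH].
  rewrite expn0 muln1; apply: leq_trans (deg PV); apply: subset_leq_card.
  apply/subsetP=> b; rewrite /layer ball_S ball_0 !inE => /andP [nbP] /orP [/eqP E|].
    by rewrite E eqxx in nbP.
  by move=> /andP [-> /existsP [a /andP [/set1P -> Rab]]].
pose Nl a := [set b in layer d.+1 | R a b].
have H1 : layer d.+1 \subset \bigcup_(a in layer d) Nl a.
  apply/subsetP=> b Hb; have [a Ha Rab] := layer_pred Hb.
  by apply/bigcupP; exists a => //; rewrite inE Hb.
have H2 : forall a, a \in layer d -> #|Nl a| <= t - 1.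
  move=> a; rewrite inE => /andP [na Ha].
  have aV : a \in V by apply: (subsetP (ball_sub d.+1)).
  have [c Hc Rca] : exists2 c, c \in ball d & R c a.
    move: Ha; rewrite ball_S inE (negbTE na) /= inE => /andP [_ /existsP [c /andP [Hc Rca]]].
    by exists c.
  have cV : c \in V by apply: (subsetP (ball_sub d)).
  have HN : c \in [set b in V | R a b] by rewrite inE cV Rsym.
  have := deg aV; rewrite (cardsD1 c) HN add1n => Hd.
  apply: leq_trans (_ : #|[set b in V | R a b] :\ c| <= _); last by lia.
  apply: subset_leq_card; apply/subsetP=> b; rewrite inE => /andP [Hb' Rab].
  move: Hb'; rewrite inE => /andP [nb Hb].
  rewrite !inE Rab andbT; apply/andP; split.
    apply/eqP=> E; subst b; move: nb; by rewrite (subsetP (ball_succ d) c Hc).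
  exact: (subsetP (ball_sub d.+2)).
apply: leq_trans (subset_leq_card H1) _.
apply: leq_trans (card_bigcup_le _ _) _.
apply: leq_trans (@leq_sum _ _ _ _ (fun _ => t - 1) H2) _.
rewrite sum_nat_const expnS mulnCA mulnA [_ * (t - 1)]mulnC.
by rewrite -mulnA leq_mul2l IH orbT.
Qed.

Lemma ball_card d : #|ball d :\ P| <= t * \sum_(i < d) (t - 1) ^ i.
Proof.
elim: d => [|d IH].
  by rewrite big_ord0 muln0 ball_0 setDv cards0.
rewrite big_ord_recr /= mulnDr.
rewrite /layer.
apply: leq_trans (_ : #|(ball d :\ P) :|: layer d| <= _).
  apply: subset_leq_card; apply/subsetP=> b; rewrite !inE.
  case: (b \in ball d) => /=; [by case/andP=>->|].
  by case/andP=> _ ->; rewrite orbT.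
apply: leq_trans (cardU_le _ _) _.
exact: leq_add IH (layer_card d).
Qed.
End Ball.

Lemma order_exists (T : finType) (g : T -> nat) :
  exists f : {ffun T -> 'I_#|T|},
    injectiveb f /\ forall a b, g a < g b -> f a < f b.
Proof.
pose N := #|T|.
pose K z := g z * N + enum_rank z.
pose S z := [set w | K w < K z].
have HS : forall z, #|S z| < #|T|.
  move=> z; have := cardsC (S z).
  have : 0 < #|~: S z| by apply/card_gt0P; exists z; rewrite !inE ltnn.
  lia.
pose f := [ffun z => Ordinal (HS z)].
have Kmono : forall a b, K a < K b -> f a < f b.
  move=> a b Kab; rewrite !ffunE /=; apply: proper_card; apply/properP; split.
    by apply/subsetP=> w; rewrite !inE => H; apply: ltn_trans H Kab.
  by exists a; rewrite !inE ?ltnn.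
exists f; split.
  apply/injectiveP=> a b fab.
  have Kab : K a = K b.
    case: (ltngtP (K a) (K b)) => // H; have := Kmono _ _ H; by rewrite fab ltnn.
  apply: enum_rank_inj; apply: val_inj => /=.
  have := congr1 (fun x => x %% N) Kab; rewrite /K /= !modnMDl !modn_small //.
move=> a b gab; apply: Kmono; rewrite /K.
have ra : (enum_rank a : nat) < N by [].
have rb : (enum_rank b : nat) < N by [].
nia.
Qed.

Lemma exp_pred_le (t k : nat) : (t - 1) ^ k <= t ^ k.
Proof. elim: k => [|k IH]; first by []. rewrite !expnS; exact: leq_mul (leq_subr _ _) IH. Qed.

Lemma arith_bound (t r : nat) : 0 < r -> t * \sum_(i < r) (t - 1) ^ i <= t ^ r.
Proof.
case: r => // r _; elim: r => [|r IH]; first by rewrite big_ord1 expn0 muln1 expn1.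
rewrite big_ord_recr /= mulnDr.
have H2 : t * (t - 1) ^ r.+1 <= (t - 1) * t ^ r.+1.
  rewrite [(t-1) ^ r.+1]expnS [t ^ r.+1]expnS mulnCA.
  exact: leq_mul (leqnn _) (leq_mul (leqnn _) (exp_pred_le _ _)).
rewrite [t ^ r.+2]expnS.

case: t IH H2 => [|t] IH H2; first by rewrite !mul0n.
apply: leq_trans (leq_add IH H2) _; by rewrite subSS subn0 -mulSn.
Qed.

Section Main.
Variable T : finType.
Variable e : rel T.
Hypothesis esym : symmetric e.
Variables (t : nat) (s : seq (T * T)) (x0 : T).
Hypothesis Hs : contraction_seq t (init_trigraph e) s.
Hypothesis om1 : 1 <= omegabar e.
Hypothesis omT : omegabar e < #|T|.

Local Notation m := (size s).
Local Notation om := (omegabar e).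

Definition Gk k := foldl (@cstep T) (init_trigraph e) (take k s).
Definition xk k := (nth (x0, x0) s k).1.
Definition yk k := (nth (x0, x0) s k).2.
Fixpoint rep k z := if k is k'.+1 then
  (if rep k' z == yk k' then xk k' else rep k' z) else z.
Definition part k a := [set z | rep k z == a].
Definition big k z := om < #|part k (rep k z)|.

Lemma Gk_succ k : k < m -> Gk k.+1 = contract (Gk k) (xk k) (yk k).
Proof. by move=> km; rewrite /Gk (take_nth (x0, x0)) // -cats1 foldl_cat. Qed.

Lemma inv k : k <= m -> InvP e (Gk k) (rep k).
Proof.
have [_ H2 _] := cseq_props x0 Hs.
elim: k => [|k IH] km.
  rewrite /Gk take0 /=; exact: InvP_init.
rewrite Gk_succ //.
have /and3P [xV yV xy] := H2 k km.
exact: (contract_inv esym xV yV xy (IH (ltnW km))).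
Qed.

Lemma red_bd k : k <= m -> red_bounded t (Gk k).
Proof. by have [H1 _ _] := cseq_props x0 Hs; apply: H1. Qed.

Lemma part_mono k k' z : k <= k' -> part k (rep k z) \subset part k' (rep k' z).
Proof.
elim: k' => [|k' IH]; first by rewrite leqn0 => /eqP->.
rewrite leq_eqVlt => /orP[/eqP->//|]; rewrite ltnS => /IH H.
apply: subset_trans H _; apply/subsetP=> w; rewrite !inE /= => /eqP->.
by [].
Qed.

Lemma big_mono k k' z : k <= k' -> big k z -> big k' z.
Proof.
move=> kk'; rewrite /big => H; apply: leq_trans H _.
exact: subset_leq_card (part_mono z kk').
Qed.

Lemma big_m z : big m z.
Proof.
have [_ _ H3] := cseq_props x0 Hs.
have [Hin _ _ _] := inv (leqnn m).
move: H3; rewrite -{1}(take_size s) -/(Gk m) => /cards1P [c Hc].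
have Hr : forall w, rep m w = c by move=> w; have := Hin w; rewrite Hc => /set1P.
rewrite /big /part.
have -> : [set w | rep m w == rep m z] = setT.
  by apply/setP=> w; rewrite !inE !Hr eqxx.
by rewrite cardsT.
Qed.

Lemma not_big0 z : ~~ big 0 z.
Proof.
rewrite /big /part /= -leqNgt.
have -> : [set w | w == z] = [set z] by apply/setP=> w; rewrite !inE.
by rewrite cards1.
Qed.

Definition tau z := find (fun k => big k z) (iota 0 m.+1).

Lemma has_big z : has (fun k => big k z) (iota 0 m.+1).
Proof. apply/hasP; exists m; last exact: big_m. by rewrite mem_iota add0n ltnSn. Qed.

Lemma tau_le z : tau z <= m.
Proof. by have := has_big z; rewrite has_find size_iota. Qed.

Lemma big_tau z : big (tau z) z.
Proof.
have := nth_find 0 (has_big z); rewrite nth_iota //.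
by rewrite ltnS tau_le.
Qed.

Lemma not_big k z : k < tau z -> ~~ big k z.
Proof.
move=> Hk; have := before_find 0 Hk; rewrite nth_iota ?add0n => [->//|].
by rewrite ltnS; apply: leq_trans (ltnW Hk) (tau_le z).
Qed.

Lemma big_tauP k z : big k z = (tau z <= k).
Proof.
apply/idP/idP => [H|H]; last exact: big_mono H (big_tau z).
by rewrite leqNgt; apply/negP => /not_big; rewrite H.
Qed.

Lemma tau_gt0 z : 0 < tau z.
Proof. by rewrite lt0n; apply/eqP => E; have := big_tau z; rewrite E (negbTE (not_big0 z)). Qed.

Lemma rep_tau j u : tau u = j.+1 -> rep j.+1 u = xk j.
Proof.
move=> Hu; apply/eqP; apply: contraT => Hne.
have : ~~ big j u by apply: not_big; rewrite Hu.
have Hbig : big j.+1 u by rewrite -Hu; exact: big_tau.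
move: Hne Hbig; rewrite /big /= .
case: (eqVneq (rep j u) (yk j)) => [->|ny]; first by rewrite eqxx.
move=> nx; set a := rep j u.
have -> : part j.+1 a = part j a.
  apply/setP=> z; rewrite !inE /=.
  case: (eqVneq (rep j z) (yk j)) => [->|//].
  by rewrite eq_sym (negbTE nx) eq_sym (negbTE ny).
by move=> ->.
Qed.


Definition blackN k a := [set z | (rep k z != a) && tB (Gk k) a (rep k z)].
Definition contrib k c := if om < #|part k c| then blackN k c else part k c.

Lemma blackN_card k a : k <= m -> om < #|part k a| -> #|blackN k a| <= om.
Proof.
move=> km Ha; have [_ _ _ Hblack] := inv km.
have := @Kss_bound T e (part k a) (blackN k a).
have -> : [disjoint part k a & blackN k a].
  rewrite -setI_eq0; apply/eqP/setP=> z; rewrite !inE.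
  by case: (rep k z == a).
have H : forall a0 b, a0 \in part k a -> b \in blackN k a -> e a0 b.
  move=> a0 b; rewrite !inE => /eqP Ha0 /andP [Hb1 Hb2].
  by apply: Hblack; rewrite Ha0 // eq_sym.
move=> /(_ isT H); lia.
Qed.

Lemma contrib_card k c : k <= m -> #|contrib k c| <= om.
Proof.
move=> km; rewrite /contrib; case: ifP => H; first exact: blackN_card.
by rewrite leqNgt H.
Qed.

Lemma no_black_big k z w : k <= m -> big k z -> big k w -> rep k z != rep k w ->
  ~~ tB (Gk k) (rep k z) (rep k w).
Proof.
move=> km bz bw zw; apply/negP => Hb.
have [_ _ _ Hblack] := inv km.
have := @Kss_bound T e (part k (rep k z)) (part k (rep k w)).
have -> : [disjoint part k (rep k z) & part k (rep k w)].
  rewrite -setI_eq0; apply/eqP/setP=> u; rewrite !inE.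
  by case: (eqVneq (rep k u) (rep k z)) => // ->; rewrite (negbTE zw).
have H : forall a0 b, a0 \in part k (rep k z) -> b \in part k (rep k w) -> e a0 b.
  move=> a0 b; rewrite !inE => /eqP Ha0 /eqP Hb2.
  by apply: Hblack; rewrite Ha0 Hb2.
move=> /(_ isT H); move: bz bw; rewrite /big; lia.
Qed.

Section Vertex.
Variable v : T.
Variable r : nat.
Local Notation i := (tau v).
Local Notation P := (rep (tau v) v).
Local Notation H := (Gk (tau v)).

Definition X1 := [set z | (rep i z == P) && (i <= tau z)].

Lemma X1_card : #|X1| <= om.*2.
Proof.
have := tau_gt0 v; case Ei: (tau v) => [//|j] _.
have HP := rep_tau Ei.
pose S a := [set z | (rep j z == a) && ~~ big j z].
have HS : forall a, #|S a| <= om.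
  move=> a; case: (set_0Vmem (S a)) => [->|[z0]]; first by rewrite cards0.
  rewrite inE => /andP [/eqP Hz0 nb].
  apply: leq_trans (_ : #|part j (rep j z0)| <= _); last by rewrite leqNgt.
  apply: subset_leq_card; apply/subsetP=> z; rewrite !inE Hz0; by case/andP.
apply: leq_trans (_ : #|S (xk j) :|: S (yk j)| <= _).
  apply: subset_leq_card; apply/subsetP=> z; rewrite !inE Ei HP => /andP [Hz Hj].
  have nb : ~~ big j z by apply: not_big.
  rewrite nb !andbT; move: Hz => /=.
  by case: (eqVneq (rep j z) (yk j)) => [->|_ ->]; rewrite ?orbT ?eqxx.
apply: leq_trans (cardU_le _ _) _; rewrite -addnn; exact: leq_add (HS _) (HS _).
Qed.

Definition Bl := ball (tV H) (tR H) P.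

Lemma walk p : path e v p -> all (fun w => tau w <= i) p ->
  rep i (last v p) \in Bl (size p) /\ big i (last v p).
Proof.
have [Hin Hsym Hedge Hblack] := inv (tau_le v).
elim/last_ind: p => [|p w IH] /=.
  by move=> _ _; rewrite set11 big_tau.
rewrite rcons_path all_rcons last_rcons size_rcons => /andP [Hp ew] /andP [tw Hall].
have [IH1 IH2] := IH Hp Hall.
have bw : big i w by rewrite big_tauP.
split=> //.
case: (eqVneq (rep i (last v p)) (rep i w)) => [<-|ne].
  exact: (subsetP (ball_succ _ _ _ _)).
have := Hedge _ _ ew ne; rewrite (negbTE (no_black_big (tau_le v) IH2 bw ne)) /= => Hr.
exact: ball_step IH1 (Hin w) Hr.
Qed.

Lemma sreach_sub (f : {ffun T -> 'I_#|T|}) :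
  (forall a b, tau a < tau b -> f b < f a) ->
  Sreach e f r v \subset
    X1 :|: blackN i P :|: \bigcup_(c in Bl r :\ P) contrib i c.
Proof.
move=> fmono; have [Hin Hsym Hedge Hblack] := inv (tau_le v).
have bv : big i v by exact: big_tau.
apply/subsetP=> u; rewrite inE => /andP [fuv /existsP [n /existsP [p]]].
move=> /and4P [Hpath /eqP Hlast _ Hinner].
have tuv : i <= tau u.
  by rewrite leqNgt; apply/negP => /fmono; rewrite ltnNge fuv.
case: (boolP (big i u)) => bu.
  have Etau : tau u = i by apply/eqP; rewrite eqn_leq tuv andbT -big_tauP.
  have : rep i u = P.
    move: (tau_gt0 v) Etau; case Ei: (tau v) => [//|j] _ Et.
    by rewrite (rep_tau Et) (rep_tau Ei).
  by move=> Eu; rewrite !inE Eu eqxx tuv.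
have szq : size (tval p) <= r by rewrite size_tuple -ltnS.
move: Hpath Hlast Hinner szq; case/lastP: (tval p) => [|q w].
  by move=> _ /= Hl _ _; rewrite -Hl; apply/setUP; left; apply/setUP; left; rewrite inE eqxx leqnn.
rewrite rcons_path last_rcons size_rcons /= -cats1 take_size_cat //.
move=> /andP [Hp ew] Ewu; subst w => Hall szq.
have Hall' : all (fun w => tau w <= i) q.
  apply: sub_all Hall => w /= Hw; rewrite leqNgt; apply/negP => /fmono.
  by rewrite ltnNge (ltnW Hw).
have [Ha Hbig] := walk Hp Hall'.
have ac : rep i (last v q) != rep i u.
  by apply: contraNneq bu => E; rewrite /big -E.
have Hsub : forall d, d <= r -> Bl d \subset Bl r by move=> d; apply: ball_mono.
case/orP: (Hedge _ _ ew ac) => HB.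
  case: (eqVneq (rep i (last v q)) P) => [EP|nP].
    by apply/setUP; left; apply/setUP; right; rewrite inE -EP eq_sym ac HB.
  apply/setUP; right; apply/bigcupP; exists (rep i (last v q)).
    by rewrite in_setD1 nP /=; apply: (subsetP (Hsub _ (ltnW szq))).
  by rewrite /contrib ifT // inE eq_sym ac HB.
have Hc : rep i u \in Bl (size q).+1 by apply: ball_step Ha (Hin u) HB.
have cP : rep i u != P.
  by apply: contraNneq bu => E; rewrite /big E.
apply/setUP; right; apply/bigcupP; exists (rep i u).
  by rewrite in_setD1 cP /=; apply: (subsetP (Hsub _ szq)).
by rewrite /contrib ifF ?inE // ; apply/negbTE.
Qed.
Lemma sreach_card (f : {ffun T -> 'I_#|T|}) :
  (forall a b, tau a < tau b -> f b < f a) ->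
  #|Sreach e f r v| <= (3 + t * \sum_(k < r) (t - 1) ^ k) * om.
Proof.
move=> fmono; have [Hin Hsym Hedge Hblack] := inv (tau_le v).
have deg : forall a, a \in tV H -> #|[set b in tV H | tR H a b]| <= t.
  move=> a aV; move/forallP: (red_bd (tau_le v)) => /(_ a) /implyP /(_ aV).
  by [].
have Hb := ball_card (t := t) Hsym deg (Hin v) r.
apply: leq_trans (subset_leq_card (sreach_sub fmono)) _.
apply: leq_trans (cardU_le _ _) _.
apply: leq_trans (leq_add (cardU_le _ _) (card_bigcup_le _ _)) _.
apply: leq_trans (leq_add (leq_add X1_card (blackN_card (tau_le v) (big_tau v)))
   (@leq_sum _ _ _ _ (fun _ => om) (fun c _ => contrib_card c (tau_le v)))) _.
rewrite sum_nat_const -addnn mulnDl.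
have : #|Bl r :\ P| * om <= t * (\sum_(k < r) (t - 1) ^ k) * om by rewrite leq_mul2r Hb orbT.
lia.
Qed.
End Vertex.

Lemma scol_bound r : scol e r <= (3 + t * \sum_(k < r) (t - 1) ^ k) * om.
Proof.
have [f [finj fmono]] := order_exists (fun z => m - tau z).
have fm : forall a b, tau a < tau b -> f b < f a.
  move=> a b Hab; apply: fmono; have := tau_le b; lia.
rewrite /scol; apply: leq_trans (bigminn_le _ _ finj) _.
apply/bigmax_leqP => v _; exact: sreach_card.
Qed.
End Main.

Theorem theorem2 (T : finType) (e : rel T) (t r : nat) :
  simple_graph e ->
  (exists x y, e x y) ->
  0 < r ->
  is_tww e t ->
  scol e r <= (3 + t * \sum_(i < r) (t - 1) ^ i) * omegabar e
  /\ (3 + t * \sum_(i < r) (t - 1) ^ i) * omegabar e <= (t ^ r + 3) * omegabar e.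
Proof.
move=> [esym eirr] [x [y exy]] r0 [[s Hs] _].
have xy : x != y by apply: contraTneq exy => ->; rewrite eirr.
split.
  apply: (scol_bound esym x Hs (omegabar_ge1 xy exy)).
  apply: omegabar_lt; apply/card_gt0P; by exists x.
rewrite leq_mul2r; apply/orP; right.
by rewrite addnC leq_add2r arith_bound.
Qed.
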